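(* Let $m$ be a positive integer, $x$ a positive integer and $r\in\{0,\dots,m-1\}$, and write $x_k=x_k(x,r)$, $r_k=r_k(x,r)$. For any integers $n,j$ with $n\ge1$ and $0\le j\le n$, $$(m+1)^{j}\big((m+1)x_{n-j}+r_{n-j}\big)\equiv \sum_{k=n-j+1}^{n}(m+1)^{n-k}m^{k-1+j-n}r_k \pmod{m^{j}}.$$ In particular, $(m+1)^n\big((m+1)x+r\big)\equiv\sum_{k=1}^n(m+1)^{n-k}m^{k-1}r_k\pmod{m^n}$ for every positive integer $n$.
   Context: Fix a positive integer $m$. The triangle $T_m$ is an array whose row $x$ ($x=1,2,\dots$) has $x$ entries, in columns $0,\dots,x-1$. Row $1$ is the single entry $1$. For $x>1$, row $x$ is obtained from row $x-1$ by rotating it cyclically left by $m$ positions (the entry in column $c$ of row $x-1$ moves to column $(c-m)\bmod(x-1)\in\{0,\dots,x-2\}$ of row $x$), then appending in column $x-1$ a new entry equal to $1$ plus the entry in column $0$ of row $x-1$. Entries are individual objects keeping their identity as they move. Tracking: for a positive integer $x$ and $r\in\{0,\dots,m-1\}$, follow the individual entry in row $x$, column $r\bmod x$. Let $(x_0,r_0),(x_1,r_1),\dots$ be the list, in strictly increasing lexicographic order, of all integer pairs $(y,c)$ with $y\ge x$, $0\le c\le m-1$, $(y,c)\ge (x,r)$ lexicographically, such that the tracked entry occupies column $c\bmod y$ of row $y$ (so $x_0=x$, $r_0=r$). Write $x_n(x,r)=x_n$, $r_n(x,r)=r_n$. *)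

(* Defs.v *)
From mathcomp Require Import all_boot.
Set Implicit Arguments. Unset Strict Implicit. Unset Printing Implicit Defensive.

(* Column (0-based) occupied in row [x + k] of the triangle T_m by the entry
   that sits in row [x], column [r mod x].  Going from row [y] (which has [y]
   entries) to row [y+1], the entry in column [c] moves to column
   [(c - m) mod y]; for [0 <= c < y] this is [(c + y - (m mod y)) mod y]. *)
Fixpoint tpos (m x r k : nat) : nat :=
  match k with
  | 0 => r %% x
  | k'.+1 => let y := x + k' in (tpos m x r k' + y - m %% y) %% y
  end.

Definition lexlt (p q : nat * nat) : bool :=
  (p.1 < q.1) || ((p.1 == q.1) && (p.2 < q.2)).

Definition tracked (m x r : nat) (p : nat * nat) : Prop :=
  [/\ x <= p.1, p.2 < m, ~~ lexlt p (x, r) & tpos m x r (p.1 - x) = p.2 %% p.1].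

(* [e] is the list (x_0,r_0),(x_1,r_1),... in strictly increasing
   lexicographic order of all elements of [tracked m x r]. *)
Definition is_lex_enum (m x r : nat) (e : nat -> nat * nat) : Prop :=
  [/\ forall n, tracked m x r (e n),
      forall n, lexlt (e n) (e n.+1)
    & forall p, tracked m x r p -> exists n, e n = p].

(* Main.v *)
Require Import Defs.
From mathcomp Require Import all_boot zify.

Lemma tpos_lt m x r k : 0 < x -> tpos m x r k < x + k.
Proof.
move=> hx; elim: k => [|k IH] /=; first by rewrite addn0 ltn_mod.
rewrite addnS; apply: leq_trans (ltn_pmod _ _) (leqnSn _); lia.
Qed.

Lemma step Y P m : 0 < Y -> P < Y ->
  m * (Y + 1) + (P + Y - m %% Y) %% Y =
  m * Y + P + (if P < m %% Y then (m %/ Y).+1 * Y else (m %/ Y) * Y).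
Proof.
move=> hY hP; have hm := divn_eq m Y; have hb := ltn_pmod m hY.
move: hm hb; set a := m %/ Y; set b := m %% Y => hm hb.
rewrite mulnDr muln1 mulSn.
case: ifP => h.
- rewrite modn_small; lia.
- have -> : P + Y - b = (P - b) + Y by lia.
  rewrite modnDr modn_small; lia.
Qed.

Definition G m x r k := m * (x + k) + tpos m x r k.

Lemma G_S m x r k : 0 < x ->
  G m x r k.+1 = G m x r k + (if tpos m x r k < m %% (x + k) then (m %/ (x+k)).+1 * (x+k) else (m %/ (x+k)) * (x+k)).
Proof.
move=> hx; rewrite /G /= addnS -addn1 step //; last exact: tpos_lt.
lia.
Qed.

Lemma G_mono m x r k d : 0 < x -> G m x r k <= G m x r (k + d).
Proof.
move=> hx; elim: d => [|d IH]; first by rewrite addn0.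
rewrite addnS G_S //; apply: leq_trans IH _; apply: leq_addr.
Qed.

Lemma G_next m x r k c : 0 < x -> c < m -> c %% (x + k) = tpos m x r k ->
  m * (x + k) + (x + k) + c <= G m x r k.+1 /\
  (m <= c + (x + k) -> G m x r k.+1 = m * (x + k) + (x + k) + c).
Proof.
move=> hx hc hP; rewrite G_S //; rewrite /G -hP.
have hY : 0 < x + k by lia.
have hm := divn_eq m (x+k); have hb := ltn_pmod m hY.
have hcq := divn_eq c (x+k); have hcb := ltn_pmod c hY.
move: hm hb hcq hcb; set Y := x + k; set a := m %/ Y; set b := m %% Y;
  set s := c %/ Y; set P := c %% Y => hm hb hcq hcb.
rewrite hcq.
case: ifP => h.
- have hsa : s <= a.
    rewrite leqNgt; apply/negP => hlt.
    have : a.+1 * Y <= s * Y by rewrite leq_mul2r hlt orbT.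
    rewrite mulSn; lia.
  have : s * Y <= a * Y by rewrite leq_mul2r hsa orbT.
  rewrite mulSn => hsY; split; first lia.
  move=> hge.
  have hsa2 : a <= s.
    rewrite leqNgt; apply/negP => hlt.
    have : s.+1 * Y <= a * Y by rewrite leq_mul2r hlt orbT.
    rewrite mulSn; lia.
  have : a * Y <= s * Y by rewrite leq_mul2r hsa2 orbT.
  lia.
- have hsa : s.+1 <= a.
    rewrite leqNgt; apply/negP => hlt.
    have : a * Y <= s * Y by rewrite leq_mul2r -ltnS hlt orbT.
    lia.
  have : s.+1 * Y <= a * Y by rewrite leq_mul2r hsa orbT.
  rewrite mulSn => hsY; split; first lia.
  move=> hge.
  have hsa2 : a <= s.+1.
    rewrite leqNgt; apply/negP => hlt.
    have : s.+2 * Y <= a * Y by rewrite leq_mul2r hlt orbT.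
    rewrite !mulSn; lia.
  have : a * Y <= s.+1 * Y by rewrite leq_mul2r hsa2 orbT.
  rewrite mulSn; lia.
Qed.

Lemma reach m x r : 0 < m -> 0 < x -> forall n k, tpos m x r k < n ->
  exists k', [/\ k <= k', tpos m x r k' < m & G m x r k' = G m x r k].
Proof.
move=> hm hx; elim=> [|n IH] k hk; first by [].
case: (ltnP (tpos m x r k) m) => h; first by exists k.
have hY := @tpos_lt m x r k hx.
have hmY : m < x + k by lia.
have hmod : m %% (x + k) = m by rewrite modn_small.
have hdiv : m %/ (x + k) = 0 by rewrite divn_small.
have e1 : G m x r k.+1 = G m x r k by rewrite G_S // hmod hdiv ltnNge h /= mul0n addn0.
have e2 : tpos m x r k.+1 = tpos m x r k - m.
  rewrite /= hmod.
  have -> : tpos m x r k + (x + k) - m = (tpos m x r k - m) + (x + k) by lia.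
  rewrite modnDr modn_small //; lia.
have [k' [h1 h2 h3]] := IH k.+1 (ltac:(lia)).
exists k'; split => //; [lia | by rewrite h3 e1].
Qed.

Lemma lexltE p q : lexlt p q = (p.1 < q.1) || ((p.1 == q.1) && (p.2 < q.2)).
Proof. by []. Qed.

Lemma lower m x r y c y' c' : 0 < m -> 0 < x ->
  tracked m x r (y, c) -> tracked m x r (y', c') -> lexlt (y, c) (y', c') ->
  m * y + y + c <= m * y' + c'.
Proof.
move=> hm hx [/= h1 h2 h3 h4] [/= h1' h2' h3' h4']; rewrite lexltE /=.
case/orP => [hlt | /andP [/eqP eqy hlt]].
- have hk : x + (y - x) = y by lia.
  have [hG _] := @G_next m x r (y - x) c hx h2 (ltac:(by rewrite hk h4)).
  rewrite hk in hG; move: hG.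
  have := @G_mono m x r (y - x).+1 (y' - x - (y - x).+1) hx.
  have -> : (y - x).+1 + (y' - x - (y - x).+1) = y' - x by lia.
  rewrite /G h4' -(subnKC h1') addKn.
  have := leq_mod c' (x + (y' - x)); lia.
- subst y'.
  have hy : 0 < y by lia.
  have hc := divn_eq c y; have hc' := divn_eq c' y.
  have hr : c %% y = c' %% y by rewrite -h4 -h4'.
  have hq : c %/ y < c' %/ y.
    rewrite -(ltn_pmul2r hy); lia.
  have : (c %/ y).+1 * y <= c' %/ y * y by rewrite leq_mul2r hq orbT.
  rewrite mulSn; lia.
Qed.

Lemma exist_next m x r y c : 0 < m -> 0 < x -> tracked m x r (y, c) ->
  exists q, [/\ tracked m x r q, lexlt (y, c) q & m * q.1 + q.2 = m * y + y + c].
Proof.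
move=> hm hx [/= h1 h2 h3 h4].
case: (ltnP (c + y) m) => hcy.
- exists (y, c + y); split => //=; last by lia.
  + split => //=.
    * move: h3; rewrite !lexltE /=; apply: contra; case/orP=> [->//|/andP[-> h]].
      by rewrite orbC /= (leq_ltn_trans (leq_addr _ _) h).
    * by rewrite modnDr.
  + rewrite lexltE /= eqxx /=; lia.
- have hk : x + (y - x) = y by lia.
  have [_ hG] := @G_next m x r (y - x) c hx h2 (ltac:(by rewrite hk h4)).
  rewrite hk in hG; have {}hG := hG hcy.
  have [k' [hk1 hk2 hk3]] := @reach m x r hm hx _ (y - x).+1 (ltnSn _).
  exists (x + k', tpos m x r k'); split => /=.
  + split => //=; first by apply: leq_addr.
    * rewrite lexltE /= negb_or; apply/andP; split; first lia.
      rewrite negb_and; apply/orP; left; apply/negP => /eqP; lia.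
    * rewrite addKn modn_small //; exact: tpos_lt.
  + rewrite lexltE /=; lia.
  + move: hk3; rewrite hG /G => ->; lia.
Qed.

Lemma lexlt_trans p q s : lexlt p q -> lexlt q s -> lexlt p s.
Proof. rewrite !lexltE; lia. Qed.
Lemma lexlt_irr p : ~~ lexlt p p.
Proof. rewrite !lexltE; lia. Qed.
Lemma lexlt_asym p q : lexlt p q -> ~~ lexlt q p.
Proof. rewrite !lexltE; lia. Qed.
Lemma lexlt_f m p q : p.2 < m -> lexlt p q -> m * p.1 + p.2 < m * q.1 + q.2.
Proof.
move=> h; rewrite lexltE; case/orP => [hl | /andP[/eqP -> hl]]; last lia.
have : m * p.1.+1 <= m * q.1 by rewrite leq_mul2l hl orbT.
rewrite mulnS; lia.
Qed.

Lemma e_mono m x r e : is_lex_enum m x r e -> forall n d, lexlt (e n) (e (n + d).+1).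
Proof.
move=> [_ h _] n; elim=> [|d IH]; first by rewrite addn0.
by apply: lexlt_trans IH _; rewrite addnS.
Qed.

Lemma e_rec m x r e : 0 < m -> 0 < x -> is_lex_enum m x r e -> forall n,
  m.+1 * (e n).1 + (e n).2 = m * (e n.+1).1 + (e n.+1).2.
Proof.
move=> hm hx he n; have [ht hs hall] := he.
case E : (e n) => [y c].
have [q [hq1 hq2 hq3]] := @exist_next m x r y c hm hx (ltac:(rewrite -E; exact: ht n)).
have [k hk] := hall q hq1.
have hnk : n < k.
  rewrite ltnNge; apply/negP => hkn.
  move: hkn; rewrite leq_eqVlt => /orP [/eqP ekn|hkn].
  - by move: hq2; rewrite -hk ekn E (negbTE (lexlt_irr _)).
  - have := @e_mono m x r e he k (n - k.+1); rewrite (_ : (k + (n - k.+1)).+1 = n); last lia.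
    by rewrite hk E (negbTE (@lexlt_asym _ _ hq2)).
have hle : m * (e n.+1).1 + (e n.+1).2 <= m * q.1 + q.2.
  move: hnk; rewrite leq_eqVlt => /orP [/eqP ->|hnk]; first by rewrite hk.
  apply: ltnW; rewrite -hk.
  have := @e_mono m x r e he n.+1 (k - n.+2); rewrite (_ : (n.+1 + (k - n.+2)).+1 = k); last lia.
  have [_ h2 _ _] := ht n.+1; exact: lexlt_f.
have hge := @lower m x r y c (e n.+1).1 (e n.+1).2 hm hx (ltac:(rewrite -E; exact: ht n)) (ltac:(rewrite -surjective_pairing; exact: ht n.+1)) (ltac:(rewrite -E -surjective_pairing; exact: hs n)).
rewrite /=; lia.
Qed.

Lemma e0 m x r e : 0 < m -> 0 < x -> r < m -> is_lex_enum m x r e -> e 0 = (x, r).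
Proof.
move=> hm hx hr he; have [ht hs hall] := he.
have hxr : tracked m x r (x, r) by split => //=; [exact: lexlt_irr | rewrite subnn].
have [k hk] := hall _ hxr.
case: k hk => [//|k] hk.
have [_ _ h3 _] := ht 0.
have := @e_mono m x r e he 0 k; rewrite add0n hk => h.
by move: h3; rewrite h.
Qed.

Theorem mainTheorem13 (m x r : nat) (e : nat -> nat * nat) :
  0 < m -> 0 < x -> r < m -> is_lex_enum m x r e ->
  (forall n j, 1 <= n -> j <= n ->
     (m.+1 ^ j * (m.+1 * (e (n - j)).1 + (e (n - j)).2)
      = \sum_(n - j + 1 <= k < n.+1) m.+1 ^ (n - k) * m ^ (k + j - n - 1) * (e k).2
        %[mod m ^ j])%N) /\
  (forall n, 1 <= n ->
     (m.+1 ^ n * (m.+1 * x + r)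
      = \sum_(1 <= k < n.+1) m.+1 ^ (n - k) * m ^ (k - 1) * (e k).2
        %[mod m ^ n])%N).
Proof.
move=> hm hx hr he.
have P1 : forall n j, 1 <= n -> j <= n ->
     (m.+1 ^ j * (m.+1 * (e (n - j)).1 + (e (n - j)).2)
      = \sum_(n - j + 1 <= k < n.+1) m.+1 ^ (n - k) * m ^ (k + j - n - 1) * (e k).2
        %[mod m ^ j])%N.
  move=> n j hn; elim: j => [_|j IH hj]; first by rewrite expn0 !modn1.
  have {}IH := IH (ltnW hj).
  set i := n - j.+1.
  have hi : n - j = i.+1 by rewrite /i; lia.
  rewrite hi in IH.
  have hrec := @e_rec m x r e hm hx he i.
  rewrite hrec.
  rewrite (_ : i + 1 = i.+1); last by rewrite addn1.
  rewrite big_ltn; last by rewrite /i; lia.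
  rewrite (_ : n - i.+1 = j); last by rewrite /i; lia.
  rewrite (_ : i.+1 + j.+1 - n - 1 = 0); last by rewrite /i; lia.
  rewrite (_ : i.+1 + 1 = i.+2) in IH; last by rewrite addn1.
  rewrite (eq_big_nat _ _ (F2 := fun k => m * (m.+1 ^ (n - k) * m ^ (k + j - n - 1) * (e k).2))); last first.
    move=> k /andP [hk1 hk2].
    rewrite (_ : k + j.+1 - n - 1 = (k + j - n - 1).+1); last by rewrite /i in hk1; lia.
    by rewrite expnS; lia.
  rewrite -big_distrr /= expn0 muln1.
  set A := m.+1 ^ j; set X := (e i.+1).1; set R := (e i.+1).2.
  set B := \sum_(_ <= _ < _) _.
  have -> : m.+1 ^ j.+1 * (m * X + R) = m * (A * (m.+1 * X + R)) + A * R.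
    rewrite expnS /A; nia.
  rewrite [in RHS]addnC -modnDml -[in RHS]modnDml; congr ((_ + _) %% _).
  by rewrite expnS -!muln_modr IH.
split => // n hn.
have := P1 n n hn (leqnn n); rewrite subnn (@e0 m x r e hm hx hr he) /= add0n.
move=> ->; congr (_ %% _); apply: eq_big_nat => k _; congr (_ * _ ^ _ * _); lia.
Qed.
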